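(* Let $\otimes$ and $\oplus$ be uninorms on $[0,1]$. If $\otimes$ satisfies property $B$ and $\oplus$ satisfies property $A'$, then $(\otimes,\oplus)$ satisfies the rearrangement inequality.
   Context: A uninorm is a function $\otimes:[0,1]^2\to[0,1]$ that is commutative, associative, monotonic ($x\leq y$ implies $x\otimes z\leq y\otimes z$), and has an identity element $e\in[0,1]$. A function $f$ (written $f(x,y)$ or $x\,f\,y$) satisfies property $B$ if for all $0\leq x\leq y\leq1$ and $0\leq z\leq w\leq 1$, $f(x,w)-f(x,z)\leq f(y,w)-f(y,z)$; property $A'$ if for all $0\leq x\leq y\leq z\leq w\leq 1$, $w+x\geq y+z$ implies $f(x,w)\geq f(y,z)$. The pair $(\otimes,\oplus)$ satisfies the rearrangement inequality if for every $n\geq1$, all $0\leq x_1\leq\cdots\leq x_n\leq 1$, $0\leq y_1\leq\cdots\leq y_n\leq 1$ and every permutation $\sigma$ of $\{1,\dots,n\}$, $$(x_n\otimes y_1)\oplus\cdots\oplus(x_1\otimes y_n)\leq (x_{\sigma(1)}\otimes y_1)\oplus\cdots\oplus(x_{\sigma(n)}\otimes y_n)\leq (x_1\otimes y_1)\oplus\cdots\oplus(x_n\otimes y_n).$$ *)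

(* Defs.v *)
From HB Require Import structures.
From mathcomp Require Import all_boot all_order all_algebra all_fingroup.
From mathcomp Require Import reals.
Set Implicit Arguments. Unset Strict Implicit. Unset Printing Implicit Defensive.
Import Order.TTheory GRing.Theory Num.Theory.
Local Open Scope ring_scope.

Section Defs.
Variable R : realType.

Definition unit_int (x : R) : bool := (0 <= x) && (x <= 1).

Definition uninorm (f : R -> R -> R) : Prop :=
  [/\ (forall x y, unit_int x -> unit_int y -> unit_int (f x y)),
      (forall x y, unit_int x -> unit_int y -> f x y = f y x),
      (forall x y z, unit_int x -> unit_int y -> unit_int z ->
          f x (f y z) = f (f x y) z),
      (forall x y z, unit_int x -> unit_int y -> unit_int z ->
          x <= y -> f x z <= f y z) &
      (exists2 e, unit_int e & forall x, unit_int x -> f e x = x)].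

Definition propB (f : R -> R -> R) : Prop :=
  forall x y z w, unit_int x -> unit_int y -> unit_int z -> unit_int w ->
    x <= y -> z <= w -> f x w - f x z <= f y w - f y z.

Definition propA' (f : R -> R -> R) : Prop :=
  forall x y z w, 0 <= x -> x <= y -> y <= z -> z <= w -> w <= 1 ->
    w + x >= y + z -> f x w >= f y z.

(* iterated operation a_1 f (a_2 f ( ... f a_k)) of a nonempty list
   (the value on the empty list is irrelevant and never used). *)
Fixpoint opsum (f : R -> R -> R) (s : seq R) : R :=
  match s with
  | [::] => 0
  | [:: a] => a
  | a :: s' => f a (opsum f s')
  end.

Definition rearrangement (tn sn : R -> R -> R) : Prop :=
  forall (n : nat) (x y : 'I_n -> R), (0 < n)%N ->
    (forall i, unit_int (x i)) -> (forall i, unit_int (y i)) ->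
    (forall i j : 'I_n, (i <= j)%N -> x i <= x j) ->
    (forall i j : 'I_n, (i <= j)%N -> y i <= y j) ->
    forall s : 'S_n,
      opsum sn [seq tn (x (rev_ord i)) (y i) | i <- enum 'I_n]
        <= opsum sn [seq tn (x (s i)) (y i) | i <- enum 'I_n]
      /\ opsum sn [seq tn (x (s i)) (y i) | i <- enum 'I_n]
        <= opsum sn [seq tn (x i) (y i) | i <- enum 'I_n].

End Defs.

(* Main.v *)
Require Import Defs.
From mathcomp Require Import all_boot all_order all_algebra all_fingroup.
From mathcomp Require Import reals.
From mathcomp Require Import zify lra.
Set Implicit Arguments. Unset Strict Implicit. Unset Printing Implicit Defensive.
Import Order.TTheory GRing.Theory Num.Theory.
Local Open Scope ring_scope.

Lemma perm_swap3 (T : eqType) (a b : T) m r :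
  perm_eq (a :: m ++ b :: r) (b :: m ++ a :: r).
Proof. apply/seq.permP => p; rewrite /= !count_cat /=; lia. Qed.

Section Fold.
Variable R : realType.
Variable F : R -> R -> R.
Variable e : R.
Hypothesis HI : forall x y, unit_int x -> unit_int y -> unit_int (F x y).
Hypothesis HC : forall x y, unit_int x -> unit_int y -> F x y = F y x.
Hypothesis HA : forall x y z, unit_int x -> unit_int y -> unit_int z ->
          F x (F y z) = F (F x y) z.
Hypothesis He : unit_int e.
Hypothesis Hid : forall x, unit_int x -> F e x = x.

Definition fsum s := foldr F e s.

Lemma fsum_in s : all (@unit_int R) s -> unit_int (fsum s).
Proof. by elim: s => [|a s IH] //= /andP[Ha Hs]; apply: HI => //; apply: IH. Qed.

Lemma fsum_mid t1 a t2 : all (@unit_int R) (t1 ++ a :: t2) ->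
  fsum (t1 ++ a :: t2) = F a (fsum (t1 ++ t2)).
Proof.
elim: t1 => [|b t1 IH] //= /andP[Hb Hr].
have Hr' := Hr; rewrite all_cat /= in Hr'; case/and3P: Hr' => H1 Ha H2.
have H12 : all (@unit_int R) (t1 ++ t2) by rewrite all_cat H1 H2.
rewrite IH // HA //; last exact: fsum_in.
rewrite (HC Hb Ha) -HA //; exact: fsum_in.
Qed.

Lemma fsum_perm s t : all (@unit_int R) s -> perm_eq s t -> fsum s = fsum t.
Proof.
elim: s t => [|a s IH] t.
  by move=> _ /perm_size/esym/size0nil ->.
move=> /= /andP[Ha Hs] Hp.
have Hat : a \in t by rewrite -(perm_mem Hp) mem_head.
move: Hp; case/splitPr: Hat => t1 t2 Hp.
have Ht : all (@unit_int R) (t1 ++ a :: t2) by rewrite -(perm_all _ Hp) /= Ha.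
rewrite fsum_mid //; congr (F a _); apply: IH => //.
rewrite -(perm_cons a); apply: perm_trans Hp _.
by rewrite -cat1s perm_catCA.
Qed.

Lemma fsum_swap a M b Q : all (@unit_int R) (a :: M ++ b :: Q) ->
  fsum (a :: M ++ b :: Q) = F (F a b) (fsum (M ++ Q)).
Proof.
move=> /= /andP[Ha H]; rewrite fsum_mid //.
have H' := H; rewrite all_cat /= in H'; case/and3P: H' => H1 Hb H2.
rewrite HA //; apply: fsum_in; by rewrite all_cat H1 H2.
Qed.

Lemma opsum_fsum s : s != [::] -> all (@unit_int R) s -> opsum F s = fsum s.
Proof.
elim: s => [|a [|b s] IH] // _ /andP[Ha Hs].
  by rewrite /= HC // Hid.
by rewrite -[LHS]/(F a (opsum F (b :: s))) IH.
Qed.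

Variable g : R -> R -> R.
Hypothesis HgI : forall x y, unit_int x -> unit_int y -> unit_int (g x y).

Definition sumL (ls ys : seq R) := fsum [seq g p.1 p.2 | p <- zip ls ys].

Lemma all_zip ls ys : all (@unit_int R) ls -> all (@unit_int R) ys ->
  all (@unit_int R) [seq g p.1 p.2 | p <- zip ls ys].
Proof.
elim: ls ys => [|a ls IH] [|b ys] //= /andP[Ha Hl] /andP[Hb Hy].
by rewrite HgI // IH.
Qed.

Lemma gen (rx cmp : rel R) :
  transitive rx -> reflexive cmp -> transitive cmp ->
  (forall u v s, unit_int u -> unit_int v -> unit_int s -> cmp u v -> cmp (F u s) (F v s)) ->
  (forall u v s, unit_int u -> unit_int v -> unit_int s -> cmp u v -> cmp (F s u) (F s v)) ->
  (forall a b c d, unit_int a -> unit_int b -> unit_int c -> unit_int d ->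
     rx a b -> c <= d -> cmp (F (g b c) (g a d)) (F (g a c) (g b d))) ->
  forall ys, sorted <=%R ys -> all (@unit_int R) ys ->
  forall xs ls, size xs = size ys -> sorted rx xs -> all (@unit_int R) xs ->
  perm_eq ls xs -> cmp (sumL ls ys) (sumL xs ys).
Proof.
move=> trx rc tc m1 m2 key.
elim=> [|y0 ys IH] Hys HIys [|x0 xs] ls //=.
  by move=> _ _ _ /perm_size/size0nil ->.
move=> [Hsz] Hxs /andP[Hx0 HIxs] Hp.
have Hys' : sorted <=%R ys by apply: path_sorted Hys.
have HIys' : all (@unit_int R) ys by case/andP: HIys.
have Hy0 : unit_int y0 by case/andP: HIys.
have Hxs' : sorted rx xs by apply: path_sorted Hxs.
have stepA : forall ls', perm_eq ls' xs ->
    cmp (sumL (x0 :: ls') (y0 :: ys)) (sumL (x0 :: xs) (y0 :: ys)).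
  move=> ls' Hp'; rewrite /sumL /=.
  have HIls' : all (@unit_int R) ls' by rewrite (perm_all _ Hp').
  apply: m2.
  - exact: fsum_in (all_zip _ _).
  - exact: fsum_in (all_zip _ _).
  - exact: HgI.
  exact: IH.
have HIls : all (@unit_int R) ls by rewrite (perm_all _ Hp) /= Hx0.
case: ls Hp HIls => [|l0 ls'] Hp HIls.
  by move/perm_size: Hp.
case: (eqVneq l0 x0) => [El|Nl].
  by subst l0; apply: stepA; rewrite -(perm_cons x0).
have Hx0ls : x0 \in ls'.
  have : x0 \in l0 :: ls' by rewrite (perm_mem Hp) mem_head.
  by rewrite in_cons eq_sym (negbTE Nl).
move: Hp HIls; case/splitPr: Hx0ls => m r Hp HIls.
have Hl0xs : l0 \in xs.
  have : l0 \in x0 :: xs by rewrite -(perm_mem Hp) mem_head.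
  by rewrite in_cons (negbTE Nl).
have Hrx : rx x0 l0 by have := order_path_min trx Hxs => /allP; apply.
have Hl0 : unit_int l0 by case/andP: HIls.
have Hszys : size ys = (size m + (size r).+1)%N.
  by move: (perm_size Hp) => /= [E]; rewrite -Hsz -E size_cat.
have Hm : (size m <= size ys)%N by rewrite Hszys leq_addr.
case Ed: (drop (size m) ys) => [|yk yr].
  by move: (size_drop (size m) ys); rewrite Ed Hszys addKn.
have Eys : ys = take (size m) ys ++ yk :: yr by rewrite -Ed cat_take_drop.
have Hyk : yk \in ys by rewrite Eys mem_cat mem_head orbT.
have Hyky : y0 <= yk by have := order_path_min le_trans Hys => /allP; apply.
have HIyk : unit_int yk by move/allP: HIys'; apply.
have Hpl : perm_eq (m ++ l0 :: r) xs.
  rewrite -(perm_cons x0); apply: perm_trans _ Hp; exact: perm_swap3.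
apply: tc (stepA _ Hpl).
have Hsm : size (take (size m) ys) = size m by rewrite size_takel.
rewrite /sumL.
rewrite [in X in cmp X _]Eys [in X in cmp _ X]Eys /= !zip_cat // !map_cat /=.
have HIm : all (@unit_int R) m by move: HIls; rewrite /= all_cat => /andP[_ /andP[]].
have HIr : all (@unit_int R) r by move: HIls; rewrite /= all_cat => /andP[_ /and3P[]].
have HIx0 : unit_int x0 by [].
have HIyl : all (@unit_int R) (take (size m) ys) by move: HIys'; rewrite {1}Eys all_cat => /andP[].
have HIyr : all (@unit_int R) yr by move: HIys'; rewrite Eys all_cat => /andP[_ /andP[]].
set M := [seq g p.1 p.2 | p <- zip m (take (size m) ys)].
set Q := [seq g p.1 p.2 | p <- zip r yr].
have HM : all (@unit_int R) M by apply: all_zip.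
have HQ : all (@unit_int R) Q by apply: all_zip.
have HMQ : all (@unit_int R) (M ++ Q) by rewrite all_cat HM HQ.
rewrite !fsum_mid; try by rewrite all_cat HM /= HgI.
have HS := fsum_in HMQ.
rewrite !HA //; try exact: HgI.
apply: m1; [ apply: HI; exact: HgI | apply: HI; exact: HgI | exact: HS | exact: key ].
Qed.
End Fold.

Lemma key_ineq (R : realType) (tn sn : R -> R -> R) :
  uninorm tn -> uninorm sn -> propB tn -> propA' sn ->
  forall a b c d, unit_int a -> unit_int b -> unit_int c -> unit_int d ->
  a <= b -> c <= d -> sn (tn b c) (tn a d) <= sn (tn a c) (tn b d).
Proof.
move=> [tI tC tA tM _] [sI sC sA sM _] HB HA a b c d Ia Ib Ic Id ab cd.
have tM2 : forall x y z, unit_int x -> unit_int y -> unit_int z ->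
    x <= y -> tn z x <= tn z y.
  by move=> x y z Ix Iy Iz xy; rewrite (tC z x) // (tC z y) // tM.
have Ip := tI _ _ Ia Ic; have Iq := tI _ _ Ib Id.
have Iu := tI _ _ Ib Ic; have Iv := tI _ _ Ia Id.
have pu : tn a c <= tn b c by apply: tM.
have pv : tn a c <= tn a d by apply: tM2.
have uq : tn b c <= tn b d by apply: tM2.
have vq : tn a d <= tn b d by apply: tM.
have hB := HB a b c d Ia Ib Ic Id ab cd.
have p0 : 0 <= tn a c by case/andP: Ip.
have q1 : tn b d <= 1 by case/andP: Iq.
case: (leP (tn b c) (tn a d)) => uv.
  apply: HA => //; lra.
rewrite sC //; apply: HA => //; [exact: ltW | lra].
Qed.

Lemma perm_map_ord (R : realType) n (x : 'I_n -> R) (f h : 'I_n -> 'I_n) :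
  injective f -> cancel h f ->
  perm_eq [seq x (f i) | i <- enum 'I_n] [seq x i | i <- enum 'I_n].
Proof.
move=> fi hf; rewrite (map_comp x f); apply: perm_map.
apply: uniq_perm; first by rewrite (map_inj_uniq fi) enum_uniq.
  exact: enum_uniq.
move=> i; rewrite mem_enum; apply/mapP; exists (h i); first by rewrite mem_enum.
by rewrite hf.
Qed.

Lemma map_zip_ord (R : realType) n (tn : R -> R -> R) (x y : 'I_n -> R) (f : 'I_n -> 'I_n) :
  [seq tn (x (f i)) (y i) | i <- enum 'I_n] =
  [seq tn p.1 p.2 | p <- zip [seq x (f i) | i <- enum 'I_n] [seq y i | i <- enum 'I_n]].
Proof. by rewrite zip_map; elim: (enum 'I_n) => //= i l ->. Qed.

Lemma sorted_ord n : sorted (relpre (@nat_of_ord n) ltn) (enum 'I_n).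
Proof. by rewrite -sorted_map val_enum_ord iota_ltn_sorted. Qed.

Theorem theorem6 (R : realType) (tn sn : R -> R -> R) :
  uninorm tn -> uninorm sn -> propB tn -> propA' sn -> rearrangement tn sn.
Proof.
move=> Ht Hs HB HA n x y n0 Hx Hy mx my s.
have Hkey := key_ineq Ht Hs HB HA.
have Ht' := Ht; have Hs' := Hs.
case: Ht' => [tI _ _ _ _]; case: Hs' => [sI sC sA sM [e He Hid]].
have sM2 : forall u v w, unit_int u -> unit_int v -> unit_int w ->
    u <= v -> sn w u <= sn w v.
  by move=> u v w Iu Iv Iw uv; rewrite (sC w u) // (sC w v) // sM.
set ys := [seq y i | i <- enum 'I_n].
have Iys : all (@unit_int R) ys by apply/allP => _ /mapP[i _ ->].
have Iall : forall f : 'I_n -> 'I_n, all (@unit_int R) [seq x (f i) | i <- enum 'I_n].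
  by move=> f; apply/allP => _ /mapP[i _ ->].
have Ene : forall f : 'I_n -> 'I_n, [seq tn (x (f i)) (y i) | i <- enum 'I_n] != [::].
  by move=> f; rewrite -size_eq0 size_map size_enum_ord -lt0n.
have Eop : forall f : 'I_n -> 'I_n, opsum sn [seq tn (x (f i)) (y i) | i <- enum 'I_n]
     = sumL sn e tn [seq x (f i) | i <- enum 'I_n] ys.
  move=> f; rewrite (opsum_fsum sC He Hid (Ene f)); last first.
    by apply/allP => _ /mapP[i _ ->]; apply: tI.
  by rewrite /sumL (map_zip_ord tn x y f).
have Ysort : sorted <=%R ys.
  rewrite sorted_map; apply: sub_sorted (sorted_ord n) => i j /= ij.
  by apply: my; apply: ltnW.
have Hsz : forall f g : 'I_n -> 'I_n,
    size [seq x (f i) | i <- enum 'I_n] = size [seq y (g i) | i <- enum 'I_n].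
  by move=> f g; rewrite !size_map.
rewrite (Eop (fun i => rev_ord i)) (Eop s) (Eop id).
split.
- apply: (@gen R sn e sI sC sA He tn tI (fun a b => b <= a) (fun a b => b <= a)).
  + by move=> a b c h1 h2; apply: le_trans h2 h1.
  + by move=> a; apply: lexx.
  + by move=> a b c h1 h2; apply: le_trans h2 h1.
  + by move=> u v w Iu Iv Iw uv; apply: sM.
  + by move=> u v w Iu Iv Iw uv; apply: sM2.
  + by move=> a b c d Ia Ib Ic Id ab cd; apply: Hkey.
  + exact: Ysort.
  + exact: Iys.
  + exact: (Hsz _ id).
  + rewrite sorted_map; apply: sub_sorted (sorted_ord n) => i j /= ij.
    apply: mx => /=; apply: leq_sub2l; exact: ltnW.
  + exact: Iall.
  + rewrite (perm_trans (perm_map_ord x (@perm_inj _ s) (permKV s))) //.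
    by rewrite perm_sym (perm_map_ord x (@rev_ord_inj n) (@rev_ordK n)).
- apply: (@gen R sn e sI sC sA He tn tI <=%R <=%R).
  + by move=> a b c h1 h2; apply: le_trans h1 h2.
  + by move=> a; apply: lexx.
  + by move=> a b c h1 h2; apply: le_trans h1 h2.
  + by move=> u v w Iu Iv Iw uv; apply: sM.
  + by move=> u v w Iu Iv Iw uv; apply: sM2.
  + by move=> a b c d Ia Ib Ic Id ab cd; apply: Hkey.
  + exact: Ysort.
  + exact: Iys.
  + exact: (Hsz id id).
  + rewrite sorted_map; apply: sub_sorted (sorted_ord n) => i j /= ij.
    by apply: mx; apply: ltnW.
  + exact: Iall.
  + exact: (perm_map_ord x (@perm_inj _ s) (permKV s)).
Qed.
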